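(* Let $G=(V,E)$ be a directed acyclic graph with real edge weights, let $s_1,t_1,s_2,t_2\in V$, let $E_\cap=E(s_1,t_1)\cap E(s_2,t_2)$, and let $\mathcal{B}$ be the set of vertex sets of the connected components of the undirected graph obtained from $(V,E_\cap)$ by ignoring edge directions. Let $i\in\{1,2\}$, let $P$ be a shortest path from $s_i$ to $t_i$, and let $x,y\in B$ for some $B\in\mathcal{B}$ with $x$ preceding $y$ on $P$. Then the subpath $P[x,y]$ lies in the induced subgraph of $(V,E_\cap)$ on $B$, i.e. all its vertices lie in $B$ and all its edges lie in $E_\cap$.
   Context: $E(x,y)$ is the set of edges lying on at least one shortest (minimum weight) path from $x$ to $y$. For a path $P$, $x$ precedes $y$ if $x=y$ or $x$ appears before $y$; $P[x,y]$ is the subpath from $x$ to $y$. *)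

(* Defs.v *)
From HB Require Import structures.
From mathcomp Require Import all_boot all_order all_algebra.
Set Implicit Arguments. Unset Strict Implicit. Unset Printing Implicit Defensive.
Import Order.TTheory GRing.Theory Num.Theory.
Local Open Scope ring_scope.

Section Graphs.
Variables (V : finType) (R : realFieldType).
Variable (e : rel V).
Variable (w : V -> V -> R).

(* A (directed) path is given by its full vertex sequence P = [:: s; ...; t]. *)
Definition is_path (s t : V) (P : seq V) : Prop :=
  exists p, P = s :: p /\ path e s p /\ last s p = t.

Definition pedges (P : seq V) : seq (V * V) := zip P (behead P).

Definition pweight (P : seq V) : R := \sum_(uv <- pedges P) w uv.1 uv.2.

Definition acyclic : Prop :=
  forall v p, path e v p -> last v p = v -> p = [::].

Definition shortest_path (s t : V) (P : seq V) : Prop :=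
  is_path s t P /\ forall Q, is_path s t Q -> pweight P <= pweight Q.

Definition Eset (s t : V) (uv : V * V) : Prop :=
  exists P, shortest_path s t P /\ uv \in pedges P.

Definition Ecap (s1 t1 s2 t2 : V) (uv : V * V) : Prop :=
  Eset s1 t1 uv /\ Eset s2 t2 uv.

(* connectivity in the undirected graph (V, F) underlying an edge set F *)
Inductive uconn (F : V * V -> Prop) (x : V) : V -> Prop :=
| uconn_refl : uconn F x x
| uconn_fwd y z : uconn F x y -> F (y, z) -> uconn F x z
| uconn_bwd y z : uconn F x y -> F (z, y) -> uconn F x z.

Definition is_component (F : V * V -> Prop) (B : V -> Prop) : Prop :=
  exists v, forall u, B u <-> uconn F v u.

End Graphs.

(* Main.v *)
Require Import Defs.
From HB Require Import structures.
From mathcomp Require Import all_boot all_order all_algebra.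
From mathcomp Require Import zify ring lra.
Set Implicit Arguments. Unset Strict Implicit. Unset Printing Implicit Defensive.
Import Order.TTheory GRing.Theory Num.Theory.
Local Open Scope ring_scope.

Section L.
Variables (V : finType) (R : realFieldType) (e : rel V) (w : V -> V -> R).

Lemma is_path_cons (s t a : V) q :
  is_path e s t (a :: q) <-> a = s /\ path e a q /\ last a q = t.
Proof.
split.
- by move=> [p [[-> ->] [hp hl]]].
- by move=> [-> [hp hl]]; exists q.
Qed.

Lemma is_path_split (s t : V) A v Bs :
  is_path e s t (A ++ v :: Bs) <-> is_path e s v (rcons A v) /\ is_path e v t (v :: Bs).
Proof.
case: A => [|a A] /=.
- rewrite !is_path_cons /=; split.
  + by move=> [-> [hp hl]].
  + by move=> [[-> _] [_ [hp hl]]].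
- rewrite !is_path_cons cat_path rcons_path last_cat last_rcons /=.
  split.
  + by move=> [-> [/andP [-> /andP [-> ->]] hl]].
  + by move=> [[-> [/andP [-> ->] _]] [_ [-> hl]]].
Qed.

Lemma pweight_cons2 (a b : V) l : pweight w (a :: b :: l) = w a b + pweight w (b :: l).
Proof. by rewrite /pweight /= big_cons. Qed.

Lemma pweight1 (a : V) : pweight w [:: a] = 0.
Proof. by rewrite /pweight /= big_nil. Qed.

Lemma pweight_cat A (v : V) Bs :
  pweight w (A ++ v :: Bs) = pweight w (rcons A v) + pweight w (v :: Bs).
Proof.
case: A => [|a A] /=; first by rewrite pweight1 add0r.
elim: A a => [|b A IH] a /=.
- by rewrite !pweight_cons2 pweight1 addr0.
- by rewrite !pweight_cons2 IH addrA.
Qed.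

Lemma pedges_split (u v : V) (Q : seq V) : (u, v) \in pedges Q -> exists A Bs, Q = A ++ u :: v :: Bs.
Proof.
elim: Q => [|a Q IH] //.
case: Q IH => [|b Q] IH //.
rewrite [pedges _]/= in_cons => /orP [/eqP [-> ->]|h].
- by exists [::], Q.
- have [A [Bs hE]] := IH h. by exists (a :: A), Bs; rewrite hE.
Qed.

Lemma pedges_catl (X Y : seq V) : {subset pedges X <= pedges (X ++ Y)}.
Proof.
elim: X => [|a X IH] //.
case: X IH => [|b X] IH //= z.
rewrite !in_cons => /orP [->//|h]. by rewrite IH ?orbT.
Qed.

Lemma pedges_cons_sub (a : V) Z : {subset pedges Z <= pedges (a :: Z)}.
Proof. case: Z => [|b Z] //= z. by rewrite in_cons => ->; rewrite orbT. Qed.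

Lemma pedges_catr (X Y : seq V) : {subset pedges Y <= pedges (X ++ Y)}.
Proof.
elim: X => [|a X IH] //= z h. apply: pedges_cons_sub. exact: IH.
Qed.

Lemma pedges_nth (x0 : V) S m : (m.+1 < size S)%N -> (nth x0 S m, nth x0 S m.+1) \in pedges S.
Proof.
elim: S m => [|a S IH] m //.
case: S IH => [|b S] IH //.
case: m => [|m] /= hm; first by rewrite in_cons eqxx.
rewrite in_cons IH ?orbT //.
Qed.


Definition phi (s t v : V) (a : R) :=
  exists A Bs, shortest_path e w s t (A ++ v :: Bs) /\ pweight w (rcons A v) = a.

Lemma shortest_eq s t P Q : shortest_path e w s t P -> shortest_path e w s t Q ->
  pweight w P = pweight w Q.
Proof. move=> [hP mP] [hQ mQ]. apply/le_anti. by rewrite mP // mQ. Qed.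

Lemma phi_uniq s t v a b : phi s t v a -> phi s t v b -> a = b.
Proof.
move=> [A [Bs [hQ ha]]] [A' [Bs' [hQ' hb]]].
have hW := shortest_eq hQ hQ'.
move: (hQ) (hQ') => [/is_path_split [p1 p2] m1] [/is_path_split [p1' p2'] m1'].
have h1 := m1 _ (proj2 (is_path_split _ _ _ _ _) (conj p1 p2')).
have h2 := m1' _ (proj2 (is_path_split _ _ _ _ _) (conj p1' p2)).
rewrite !pweight_cat in hW h1 h2. subst a b. lra.
Qed.

Lemma edge_phi s t u v : Eset e w s t (u, v) ->
  exists a, phi s t u a /\ phi s t v (a + w u v).
Proof.
move=> [Q [hQ /pedges_split [A [Bs hE]]]]. subst Q.
exists (pweight w (rcons A u)). split; first by exists A, (v :: Bs).
exists (rcons A u), Bs. rewrite cat_rcons. split => //.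
have -> : rcons (rcons A u) v = A ++ u :: [:: v] by rewrite -!cats1 -catA.
by rewrite pweight_cat pweight_cons2 pweight1 addr0.
Qed.

Section Comp.
Variables (sa ta sb tb : V) (F : V * V -> Prop).
Hypothesis hF : forall uv, F uv <-> Eset e w sa ta uv /\ Eset e w sb tb uv.

Lemma comp_phi r z : uconn F r z -> z = r \/ exists ra rb za zb,
  phi sa ta r ra /\ phi sb tb r rb /\ phi sa ta z za /\ phi sb tb z zb /\ za - ra = zb - rb.
Proof.
elim => [|y z0 _ IH hyz|y z0 _ IH hzy]; first by left.
- right. move/hF: hyz => [/edge_phi [a1 [ha1 ha2]] /edge_phi [b1 [hb1 hb2]]].
  case: IH => [eyr|[ra [rb [ya [yb [hra [hrb [hya [hyb hd]]]]]]]]].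
  + subst y. exists a1, b1, (a1 + w r z0), (b1 + w r z0). do 4 (split => //). ring.
  + rewrite -(phi_uniq hya ha1) in ha2. rewrite -(phi_uniq hyb hb1) in hb2.
    exists ra, rb, (ya + w y z0), (yb + w y z0). do 4 (split => //). lra.
- right. move/hF: hzy => [/edge_phi [a1 [ha1 ha2]] /edge_phi [b1 [hb1 hb2]]].
  case: IH => [eyr|[ra [rb [ya [yb [hra [hrb [hya [hyb hd]]]]]]]]].
  + subst y. exists (a1 + w z0 r), (b1 + w z0 r), a1, b1. do 4 (split => //). ring.
  + have e1 := phi_uniq hya ha2. have e2 := phi_uniq hyb hb2.
    exists ra, rb, a1, b1. do 4 (split => //). lra.
Qed.

Lemma pair_phi r x y : uconn F r x -> uconn F r y -> x <> y -> exists xa xb ya yb,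
  phi sa ta x xa /\ phi sb tb x xb /\ phi sa ta y ya /\ phi sb tb y yb /\ ya - xa = yb - xb.
Proof.
move=> /comp_phi hx /comp_phi hy nxy.
case: hx => [exr|[ra [rb [xa [xb [hra [hrb [hxa [hxb hdx]]]]]]]]];
case: hy => [eyr|[ra' [rb' [ya [yb [hra' [hrb' [hya [hyb hdy]]]]]]]]].
- by subst.
- subst x. by exists ra', rb', ya, yb.
- subst y. exists xa, xb, ra, rb. do 4 (split => //). lra.
- have e1 := phi_uniq hra hra'. have e2 := phi_uniq hrb hrb'.
  exists xa, xb, ya, yb. do 4 (split => //). lra.
Qed.

End Comp.

Lemma main (sa ta sb tb : V) (F : V * V -> Prop)
  (hF : forall uv, F uv <-> Eset e w sa ta uv /\ Eset e w sb tb uv)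
  (B : V -> Prop) (P : seq V) (x y : V) (i j : nat) :
  acyclic e -> shortest_path e w sa ta P -> is_component F B -> B x -> B y ->
  (i <= j)%N -> (j < size P)%N -> nth x P i = x -> nth x P j = y ->
  (forall k, (i <= k <= j)%N -> B (nth x P k)) /\
  (forall k, (i <= k < j)%N -> F (nth x P k, nth x P k.+1)).
Proof.
move=> hac hP [r hB] hx hy hij hj hi hjy.
rewrite leq_eqVlt in hij; case/orP: hij => [/eqP eij|hij].
  subst j. split.
  - move=> k /andP[h1 h2]. have -> : k = i by apply/eqP; rewrite eqn_leq h1 h2.
    by rewrite hi.
  - move=> k /andP[h1 h2]. exfalso. lia.
set A := take i P; set D := drop i.+1 P.
have hPe : P = A ++ x :: D.
  have hil : (i < size P)%N by lia.
  by rewrite -hi /A /D -(drop_nth x) ?cat_take_drop.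
have hsA : size A = i by rewrite /A size_takel //; lia.
have hsD : size D = (size P - i.+1)%N by rewrite /D size_drop.
set M := take (j - i.+1) D; set C := drop (j - i.+1).+1 D.
have hDe : D = M ++ y :: C.
  have hl : (j - i.+1 < size D)%N by rewrite hsD; lia.
  have hy' : nth x D (j - i.+1) = y.
    by rewrite /D nth_drop; have -> : (i.+1 + (j - i.+1) = j)%N by lia.
  by rewrite -hy' /M /C -(drop_nth x) ?cat_take_drop.
have hsM : size M = (j - i.+1)%N by rewrite /M size_takel //; rewrite hsD; lia.
set S := rcons (x :: M) y.
have hPS : P = A ++ S ++ C by rewrite hPe hDe /S cat_rcons.
have hsS : size S = (j - i).+1 by rewrite /S size_rcons /= hsM; lia.
have hnth : forall m, (m < size S)%N -> nth x P (i + m)%N = nth x S m.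
  move=> m hm. rewrite hPS. have -> := seq.nth_cat x A (S ++ C) (i+m)%N.
  rewrite hsA ltnNge leq_addr /= addKn. have -> := seq.nth_cat x S C m. by rewrite hm.
move: (hP) => [hPp hPm].
rewrite hPe hDe in hPp.
move/is_path_split: hPp => [hAx hxt].
have hxt' : is_path e x ta ((x :: M) ++ y :: C) by [].
move/is_path_split: hxt' => [hSp hyt].
have nxy : x <> y.
  move=> exy. move: hSp => [p [hp [hpp hpl]]].
  rewrite /S /= in hp. case: hp => hp. rewrite -exy in hpl.
  have := hac x p hpp hpl. rewrite -hp. by case: (M).
have hphx : phi sa ta x (pweight w (rcons A x)).
  exists A, (M ++ y :: C). by rewrite -hDe -hPe.
have hphy : phi sa ta y (pweight w (rcons A x) + pweight w S).
  exists (A ++ x :: M), C. rewrite -catA /= -hDe -hPe. split => //.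
  by rewrite rcons_cat pweight_cat.
have [xa [xb [ya [yb [hxa [hxb [hya [hyb hd]]]]]]]] :=
  pair_phi hF (proj1 (hB x) hx) (proj1 (hB y) hy) nxy.
have e1 := phi_uniq hxa hphx. have e2 := phi_uniq hya hphy.
move: hxb hyb => [A2 [B2 [hQ2 hw2]]] [A3 [B3 [hQ3 hw3]]].
set Q := A2 ++ S ++ B3.
have hQ : shortest_path e w sb tb Q.
  move: (hQ2) (hQ3) => [/is_path_split [p2 _] _] [/is_path_split [_ p3] m3].
  have hQe : Q = A2 ++ x :: (M ++ y :: B3) by rewrite /Q /S cat_rcons.
  have hwQ : pweight w Q = pweight w (A3 ++ y :: B3).
    rewrite hQe pweight_cat.
    have -> : x :: M ++ y :: B3 = (x :: M) ++ y :: B3 by [].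
    rewrite pweight_cat pweight_cat -/S hw2 hw3. lra.
  split.
  - rewrite hQe; apply/is_path_split; split => //.
    have -> : x :: M ++ y :: B3 = (x :: M) ++ y :: B3 by [].
    by apply/is_path_split.
  - move=> Q' hQ'. rewrite hwQ. exact: m3.
have hedge : forall k, (i <= k < j)%N -> F (nth x P k, nth x P k.+1).
  move=> k /andP [h1 h2].
  have hk : k = (i + (k - i))%N by lia.
  have hk1 : k.+1 = (i + (k - i).+1)%N by lia.
  rewrite hk1 {1}hk !hnth; try (rewrite hsS; lia).
  have hin : (nth x S (k - i), nth x S (k - i).+1) \in pedges S.
    apply: pedges_nth; rewrite hsS; lia.
  apply/hF; split.
  - exists P; split => //. rewrite hPS. apply: pedges_catr. exact: pedges_catl.
  - exists Q; split => //. rewrite /Q. apply: pedges_catr. exact: pedges_catl.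
split => //.
have hv : forall m, (i + m <= j)%N -> B (nth x P (i + m)).
  elim => [|m IH] hm; first by rewrite addn0 hi.
  have hb := IH ltac:(lia).
  have hf := hedge (i + m)%N ltac:(lia).
  apply/hB. rewrite addnS. apply: uconn_fwd hf. exact/hB.
move=> k /andP [h1 h2]. have -> : k = (i + (k - i))%N by lia.
apply: hv. lia.
Qed.

End L.

Theorem lemma19 (V : finType) (R : realFieldType) (e : rel V) (w : V -> V -> R)
  (s1 t1 s2 t2 : V) (B : V -> Prop) (s t : V) (P : seq V) (x y : V) (i j : nat) :
  acyclic e ->
  ((s = s1 /\ t = t1) \/ (s = s2 /\ t = t2)) ->
  shortest_path e w s t P ->
  is_component (Ecap e w s1 t1 s2 t2) B ->
  B x -> B y ->
  (i <= j)%N -> (j < size P)%N -> nth x P i = x -> nth x P j = y ->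
  (forall k, (i <= k <= j)%N -> B (nth x P k)) /\
  (forall k, (i <= k < j)%N -> Ecap e w s1 t1 s2 t2 (nth x P k, nth x P k.+1)).
Proof.
move=> hac [[-> ->]|[-> ->]].
- have hF : forall uv, Ecap e w s1 t1 s2 t2 uv <-> Eset e w s1 t1 uv /\ Eset e w s2 t2 uv.
    by move=> uv; rewrite /Ecap; tauto.
  exact: (main hF hac).
- have hF : forall uv, Ecap e w s1 t1 s2 t2 uv <-> Eset e w s2 t2 uv /\ Eset e w s1 t1 uv.
    by move=> uv; rewrite /Ecap; tauto.
  exact: (main hF hac).
Qed.
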